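(* Let $\mathcal{T}$ be a stiffly-connected, edge-simple 3-dimensional truss with vertices at points $\mathbf{p}_1,\dots,\mathbf{p}_n$, and let $\mathbf{q}\in\mathbb{R}^{3n}$ be orthogonal to the null space of its stiffness matrix. For each oriented triangle $s=\langle s_1,s_2,s_3\rangle$ of the mesh there exists a (unique) vector $\bar{\mathbf{q}}^{\langle s\rangle}=\mathbf{q}+c^{\langle s\rangle\perp xy}\mathbf{p}^{\perp xy}+c^{\langle s\rangle\perp xz}\mathbf{p}^{\perp xz}+c^{\langle s\rangle\perp yz}\mathbf{p}^{\perp yz}$ with scalars $c^{\langle s\rangle\perp xy},c^{\langle s\rangle\perp xz},c^{\langle s\rangle\perp yz}\in\mathbb{R}$, such that (1) the plane containing the points $\bar{\mathbf{q}}^{\langle s\rangle}_{s_1},\bar{\mathbf{q}}^{\langle s\rangle}_{s_2},\bar{\mathbf{q}}^{\langle s\rangle}_{s_3}$ is parallel to the plane containing $\mathbf{p}_{s_1},\mathbf{p}_{s_2},\mathbf{p}_{s_3}$, and (2) the segment from $\bar{\mathbf{q}}^{\langle s\rangle}_{s_1}$ to $\bar{\mathbf{q}}^{\langle s\rangle}_{s_2}$ is parallel to $\mathbf{p}_{s_1}-\mathbf{p}_{s_2}$.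
   Context: A 3-dimensional truss has $n$ vertices at distinct points $\mathbf{p}_i\in\mathbb{R}^3$, a set of tetrahedra (four vertices each), edges all pairs of vertices sharing a tetrahedron, and positive stiffness coefficients $\gamma(e)$; its stiffness matrix is $\sum_{e=(i,j)}\frac{\gamma(e)}{\|\mathbf{p}_i-\mathbf{p}_j\|_2}\mathbf{b}^{(e)}\mathbf{b}^{(e)\top}$ where $\mathbf{b}^{(e)}\in\mathbb{R}^{3n}$ has block $i$ equal to $(\mathbf{p}_i-\mathbf{p}_j)/\|\mathbf{p}_i-\mathbf{p}_j\|_2$, block $j$ its negative, zeros elsewhere. Edge-simple: tetrahedra form a simplicial complex, each has constant-bounded aspect ratio, and edge lengths and stiffness coefficients are bounded above and below by positive constants. Stiffly-connected: the graph on tetrahedra with adjacency = sharing a triangle face is connected, and for each vertex its restriction to the tetrahedra containing that vertex is connected. For a vector $\mathbf{v}\in\mathbb{R}^{3n}$, $\mathbf{v}_i\in\mathbb{R}^3$ denotes its $i$-th block (coordinates $3i-2,\dots,3i$). Fix an index $c$; define $\mathbf{p}^{\perp xy},\mathbf{p}^{\perp xz},\mathbf{p}^{\perp yz}\in\mathbb{R}^{3n}$ by $\mathbf{p}^{\perp xy}_i=[-(\mathbf{p}_i-\mathbf{p}_c)_y,(\mathbf{p}_i-\mathbf{p}_c)_x,0]^\top$, $\mathbf{p}^{\perp xz}_i=[-(\mathbf{p}_i-\mathbf{p}_c)_z,0,(\mathbf{p}_i-\mathbf{p}_c)_x]^\top$, $\mathbf{p}^{\perp yz}_i=[0,-(\mathbf{p}_i-\mathbf{p}_c)_z,(\mathbf{p}_i-\mathbf{p}_c)_y]^\top$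 (these, together with the three translation vectors, span the null space of the stiffness matrix). An oriented triangle is an ordered triple of vertices forming a triangle face of some tetrahedron. *)

(* Defs.v *)
(* Vectors of R^3 are row vectors 'rV[R]_3; a vector of
   R^{3n} is represented blockwise as a matrix 'M[R]_(n,3) whose i-th row is
   the i-th block (coordinates 3i-2..3i). *)
From HB Require Import structures.
From mathcomp Require Import all_boot all_order all_algebra.
Set Implicit Arguments. Unset Strict Implicit. Unset Printing Implicit Defensive.
Import Order.TTheory GRing.Theory Num.Theory.
Local Open Scope ring_scope.

Section Truss.
Variable R : rcfType.

Definition cx (v : 'rV[R]_3) : R := v ord0 (inord 0).
Definition cy (v : 'rV[R]_3) : R := v ord0 (inord 1).
Definition cz (v : 'rV[R]_3) : R := v ord0 (inord 2).

Definition vec3 (a b c : R) : 'rV[R]_3 :=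
  \row_(k < 3) (if val k == 0%N then a else if val k == 1%N then b else c).

Definition dot3 (u v : 'rV[R]_3) : R := \sum_(k < 3) u ord0 k * v ord0 k.
Definition norm3 (u : 'rV[R]_3) : R := Num.sqrt (dot3 u u).
Definition cross3 (u v : 'rV[R]_3) : 'rV[R]_3 :=
  vec3 (cy u * cz v - cz u * cy v) (cz u * cx v - cx u * cz v)
       (cx u * cy v - cy u * cx v).
Definition det3 (u v w : 'rV[R]_3) : R := dot3 u (cross3 v w).

Variable n : nat.

Definition dotN (u v : 'M[R]_(n,3)) : R := \sum_(i < n) \sum_(k < 3) u i k * v i k.

Definition elen (p : 'I_n -> 'rV[R]_3) (i j : 'I_n) : R := norm3 (p i - p j).

Definition is_edge (tets : {set {set 'I_n}}) (i j : 'I_n) : bool :=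
  (i != j) && [exists T in tets, (i \in T) && (j \in T)].

Definition bvec (p : 'I_n -> 'rV[R]_3) (i j : 'I_n) : 'M[R]_(n,3) :=
  \matrix_(k < n, l < 3)
    (if k == i then (p i - p j) ord0 l / elen p i j
     else if k == j then - ((p i - p j) ord0 l / elen p i j) else 0).

(* the stiffness matrix, as the linear operator v |-> K v on R^{3n};
   edges are unordered, summed once with i < j; gamma is indexed by the
   edge {i,j} *)
Definition stiffness (p : 'I_n -> 'rV[R]_3) (tets : {set {set 'I_n}})
    (gamma : {set 'I_n} -> R) (v : 'M[R]_(n,3)) : 'M[R]_(n,3) :=
  \sum_(i < n) \sum_(j < n | (i < j)%N && is_edge tets i j)
     ((gamma [set i; j] / elen p i j) * dotN (bvec p i j) v) *: bvec p i j.

Definition in_hull (p : 'I_n -> 'rV[R]_3) (S : {set 'I_n}) (x : 'rV[R]_3) : Prop :=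
  exists w : 'I_n -> R,
    [/\ forall i, 0 <= w i, forall i, i \notin S -> w i = 0,
        \sum_(i < n) w i = 1 & x = \sum_(i < n) w i *: p i].

(* the tetrahedra form a (geometric) simplicial complex: each is a 4-set of
   vertices, and two tetrahedra meet exactly in the hull of their common
   vertices (a common face, possibly empty) *)
Definition simplicial_complex (p : 'I_n -> 'rV[R]_3) (tets : {set {set 'I_n}}) : Prop :=
  (forall T, T \in tets -> #|T| = 4%N) /\
  (forall T1 T2, T1 \in tets -> T2 \in tets -> forall x,
     in_hull p T1 x -> in_hull p T2 x -> in_hull p (T1 :&: T2) x).

(* aspect ratio of T bounded by A: (longest edge)^3 <= A * 6 * volume *)
Definition aspect_bounded (p : 'I_n -> 'rV[R]_3) (A : R) (T : {set 'I_n}) : Prop :=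
  forall a b c d, a \in T -> b \in T -> c \in T -> d \in T ->
    uniq [:: a; b; c; d] ->
    forall i j, i \in T -> j \in T ->
      elen p i j ^+ 3 <= A * `|det3 (p b - p a) (p c - p a) (p d - p a)|.

Definition edge_simple (p : 'I_n -> 'rV[R]_3) (tets : {set {set 'I_n}})
    (gamma : {set 'I_n} -> R) (A lmin lmax gmin gmax : R) : Prop :=
  [/\ 0 < A, 0 < lmin & 0 < gmin] /\
  [/\ simplicial_complex p tets,
      (forall T, T \in tets -> aspect_bounded p A T),
      (forall i j, is_edge tets i j -> lmin <= elen p i j <= lmax) &
      (forall i j, is_edge tets i j -> gmin <= gamma [set i; j] <= gmax)].

Definition face_adj (S : {set {set 'I_n}}) : rel {set 'I_n} :=
  fun T1 T2 => [&& T1 \in S, T2 \in S & #|T1 :&: T2| == 3%N].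

Definition graph_connected (S : {set {set 'I_n}}) : Prop :=
  forall T1 T2, T1 \in S -> T2 \in S -> connect (face_adj S) T1 T2.

Definition stiffly_connected (tets : {set {set 'I_n}}) : Prop :=
  graph_connected tets /\
  forall v : 'I_n, graph_connected [set T in tets | v \in T].

(* the infinitesimal rotation vectors about p_c *)
Definition pxy (p : 'I_n -> 'rV[R]_3) (c : 'I_n) : 'M[R]_(n,3) :=
  \matrix_(i < n) (let d := p i - p c in vec3 (- cy d) (cx d) 0).
Definition pxz (p : 'I_n -> 'rV[R]_3) (c : 'I_n) : 'M[R]_(n,3) :=
  \matrix_(i < n) (let d := p i - p c in vec3 (- cz d) 0 (cx d)).
Definition pyz (p : 'I_n -> 'rV[R]_3) (c : 'I_n) : 'M[R]_(n,3) :=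
  \matrix_(i < n) (let d := p i - p c in vec3 0 (- cz d) (cy d)).

Definition oriented_triangle (tets : {set {set 'I_n}}) (s1 s2 s3 : 'I_n) : Prop :=
  uniq [:: s1; s2; s3] /\ exists2 T, T \in tets & [&& s1 \in T, s2 \in T & s3 \in T].

Definition blk (v : 'M[R]_(n,3)) (i : 'I_n) : 'rV[R]_3 := row i v.

Definition triangle_aligned (p : 'I_n -> 'rV[R]_3) (qb : 'M[R]_(n,3))
    (s1 s2 s3 : 'I_n) : Prop :=
  let N := cross3 (p s2 - p s1) (p s3 - p s1) in
  [/\ dot3 (blk qb s2 - blk qb s1) N = 0,
      dot3 (blk qb s3 - blk qb s1) N = 0 &
      cross3 (blk qb s1 - blk qb s2) (p s1 - p s2) = 0].

End Truss.

(* Main.v *)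
Require Import Defs.
From HB Require Import structures.
From mathcomp Require Import all_boot all_order all_algebra ring lra.
Import Order.TTheory GRing.Theory Num.Theory.
Local Open Scope ring_scope.



Lemma vi3 m : (m < 3)%N -> val (inord m : 'I_3) = m.
Proof. exact: inordK. Qed.

Lemma vec3E (R : rcfType) (v : 'rV[R]_3) : v = vec3 (cx v) (cy v) (cz v).
Proof.
apply/rowP => k; rewrite /vec3 /cx /cy /cz !mxE.
case: k => [[|[|[|k]]] Hk] //=; rewrite (ord1 ord0); congr (v _ _); apply/val_inj; by rewrite /= inordK.
Qed.

Lemma vec3_eq (R : rcfType) a b c a' b' c' :
  (vec3 a b c = vec3 a' b' c' :> 'rV[R]_3) <-> [/\ a = a', b = b' & c = c'].
Proof.
split.
  move=> H; (have e m : (m < 3)%N -> val (inord m : 'I_3) = m by exact: inordK); split; [have := congr1 (fun v : 'rV[R]_3 => v ord0 (inord 0)) H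
  | have := congr1 (fun v : 'rV[R]_3 => v ord0 (inord 1)) H
  | have := congr1 (fun v : 'rV[R]_3 => v ord0 (inord 2)) H];
  by rewrite /vec3 !mxE !e.
by case=> -> -> ->.
Qed.

Lemma vec3D (R : rcfType) (a b c a' b' c' : R) :
  vec3 a b c + vec3 a' b' c' = vec3 (a + a') (b + b') (c + c').
Proof. by apply/rowP => k; rewrite /vec3 !mxE; case: ifP => //; case: ifP. Qed.

Lemma vec3N (R : rcfType) (a b c : R) : - vec3 a b c = vec3 (-a) (-b) (-c).
Proof. by apply/rowP => k; rewrite /vec3 !mxE; case: ifP => //; case: ifP. Qed.

Lemma vec3Z (R : rcfType) (k a b c : R) : k *: vec3 a b c = vec3 (k*a) (k*b) (k*c).
Proof. by apply/rowP => i; rewrite /vec3 !mxE; case: ifP => //; case: ifP. Qed.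

Lemma vec30 (R : rcfType) : 0 = vec3 0 0 0 :> 'rV[R]_3.
Proof. by apply/rowP => i; rewrite /vec3 !mxE; case: ifP => //; case: ifP. Qed.

Lemma cxE (R : rcfType) (a b c : R) : cx (vec3 a b c) = a.
Proof. by rewrite /cx /vec3 mxE vi3. Qed.
Lemma cyE (R : rcfType) (a b c : R) : cy (vec3 a b c) = b.
Proof. by rewrite /cy /vec3 mxE vi3. Qed.
Lemma czE (R : rcfType) (a b c : R) : cz (vec3 a b c) = c.
Proof. by rewrite /cz /vec3 mxE vi3. Qed.

Lemma dot3E (R : rcfType) (a b c a' b' c' : R) :
  dot3 (vec3 a b c) (vec3 a' b' c') = a * a' + b * b' + c * c'.
Proof. by rewrite /dot3 !big_ord_recr big_ord0 /vec3 !mxE /= add0r. Qed.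

Lemma cross3E (R : rcfType) (a b c a' b' c' : R) :
  cross3 (vec3 a b c) (vec3 a' b' c') =
  vec3 (b * c' - c * b') (c * a' - a * c') (a * b' - b * a').
Proof. by rewrite /cross3 !cxE !cyE !czE. Qed.

Lemma row_D (R : rcfType) n (i : 'I_n) (A B : 'M[R]_(n,3)) : row i (A + B) = row i A + row i B.
Proof. by apply/rowP => k; rewrite !mxE. Qed.
Lemma row_Z (R : rcfType) n (i : 'I_n) (k : R) (A : 'M[R]_(n,3)) : row i (k *: A) = k *: row i A.
Proof. by apply/rowP => l; rewrite !mxE. Qed.
Lemma row_K (R : rcfType) n (i : 'I_n) (f : 'I_n -> 'rV[R]_3) : row i (\matrix_(j < n) f j) = f i.
Proof. by apply/rowP => l; rewrite !mxE. Qed.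
Arguments vec3E {R}.



Lemma blk_diff (R : rcfType) n (p : 'I_n -> 'rV[R]_3) c (q : 'M[R]_(n,3)) cxy cxz cyz i j :
 blk (q + cxy *: pxy p c + cxz *: pxz p c + cyz *: pyz p c) i
 - blk (q + cxy *: pxy p c + cxz *: pxz p c + cyz *: pyz p c) j
 = (blk q i - blk q j) + cross3 (vec3 cyz (-cxz) cxy) (p i - p j).
Proof.
rewrite /blk !row_D !row_Z /pxy /pxz /pyz !row_K.
rewrite (@vec3E _ (p i)) (@vec3E _ (p j)) (@vec3E _ (p c)) (@vec3E _ (row i q)) (@vec3E _ (row j q)).
rewrite ?vec3N ?vec3D ?cxE ?cyE ?czE ?vec3Z ?vec3N ?vec3D ?cross3E ?vec3N ?vec3D ?vec3Z ?vec3D.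
apply/vec3_eq; split; ring.
Qed.



Definition PP (R : rcfType) (a b u v w : 'rV[R]_3) :=
  [/\ dot3 (u + cross3 w a) (cross3 a b) = 0, dot3 (v + cross3 w b) (cross3 a b) = 0
    & cross3 (- u + cross3 w (- a)) (- a) = 0].

Arguments PP {R}.

Lemma core (R : rcfType) (a b u v : 'rV[R]_3) : cross3 a b != 0 ->
  exists w, PP a b u v w /\ forall w', PP a b u v w' -> w' = w.
Proof.
rewrite (vec3E a) (vec3E b) (vec3E u) (vec3E v).
move: (cx a) (cy a) (cz a) (cx b) (cy b) (cz b) (cx u) (cy u) (cz u) (cx v) (cy v) (cz v).
move=> a1 a2 a3 b1 b2 b3 u1 u2 u3 v1 v2 v3.
rewrite cross3E vec30; move/eqP => Hn.
pose N1 := a2 * b3 - a3 * b2. pose N2 := a3 * b1 - a1 * b3. pose N3 := a1 * b2 - a2 * b1.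
have HN : N1 ^+ 2 + N2 ^+ 2 + N3 ^+ 2 != 0.
  apply/negP => /eqP H0; apply: Hn; apply/vec3_eq.
  have h1 : N1 = 0 by nra.
  have h2 : N2 = 0 by nra.
  have h3 : N3 = 0 by nra.
  by split.
have HA : a1 ^+ 2 + a2 ^+ 2 + a3 ^+ 2 != 0.
  apply/negP => /eqP H0; move/negP: HN; apply.
  have h1 : a1 = 0 by nra.
  have h2 : a2 = 0 by nra.
  have h3 : a3 = 0 by nra.
  by rewrite /N1 /N2 /N3 h1 h2 h3; apply/eqP; ring.
pose A2 := a1 ^+ 2 + a2 ^+ 2 + a3 ^+ 2.
pose x1 := (u2 * a3 - u3 * a2) / A2.
pose x2 := (u3 * a1 - u1 * a3) / A2.
pose x3 := (u1 * a2 - u2 * a1) / A2.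
pose lam := (u1 * a1 + u2 * a2 + u3 * a3) / A2.
pose mu := - ((v1 * N1 + v2 * N2 + v3 * N3) +
   ((x2 * b3 - x3 * b2) * N1 + (x3 * b1 - x1 * b3) * N2 + (x1 * b2 - x2 * b1) * N3)) / (N1 ^+ 2 + N2 ^+ 2 + N3 ^+ 2).
have h1 : u1 = lam * a1 - (x2 * a3 - x3 * a2).
  rewrite /lam /x2 /x3 /A2; field; exact: HA.
have h2 : u2 = lam * a2 - (x3 * a1 - x1 * a3).
  rewrite /lam /x1 /x3 /A2; field; exact: HA.
have h3 : u3 = lam * a3 - (x1 * a2 - x2 * a1).
  rewrite /lam /x1 /x2 /A2; field; exact: HA.
have hmu : mu * (N1 ^+ 2 + N2 ^+ 2 + N3 ^+ 2) = - ((v1 * N1 + v2 * N2 + v3 * N3) +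
   ((x2 * b3 - x3 * b2) * N1 + (x3 * b1 - x1 * b3) * N2 + (x1 * b2 - x2 * b1) * N3)).
  rewrite /mu; field; exact: HN.
clearbody mu lam x1 x2 x3.
exists (vec3 (x1 + mu * a1) (x2 + mu * a2) (x3 + mu * a3)); split.
  rewrite /PP !cross3E !vec3N !cross3E !vec3D !cross3E !dot3E vec30; split.
  - rewrite h1 h2 h3; ring.
  - apply: (@eq_trans _ _ (((v1 * N1 + v2 * N2 + v3 * N3) +
     ((x2 * b3 - x3 * b2) * N1 + (x3 * b1 - x1 * b3) * N2 + (x1 * b2 - x2 * b1) * N3)) + 
      mu * (N1 ^+ 2 + N2 ^+ 2 + N3 ^+ 2))).
      rewrite /N1 /N2 /N3; ring.
    by rewrite hmu addrN.
  - apply/vec3_eq; rewrite h1 h2 h3; split; ring.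
move=> w'; rewrite (vec3E w'); move: (cx w') (cy w') (cz w') => y1 y2 y3.
rewrite /PP !cross3E !vec3N !cross3E !vec3D !cross3E !dot3E vec30.
case=> _ E2 /vec3_eq [E31 E32 E33].
move: E31 E32 E33; rewrite h1 h2 h3 => E31 E32 E33.
pose s := (y1 - x1) * a1 + (y2 - x2) * a2 + (y3 - x3) * a3.
have F1 : a1 * s - (y1 - x1) * A2 = 0 by rewrite -E31 /s /A2; ring.
have F2 : a2 * s - (y2 - x2) * A2 = 0 by rewrite -E32 /s /A2; ring.
have F3 : a3 * s - (y3 - x3) * A2 = 0 by rewrite -E33 /s /A2; ring.
pose Q := (v1 * N1 + v2 * N2 + v3 * N3) +
   ((x2 * b3 - x3 * b2) * N1 + (x3 * b1 - x1 * b3) * N2 + (x1 * b2 - x2 * b1) * N3).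
have T0 : s * (N1 ^+ 2 + N2 ^+ 2 + N3 ^+ 2) + A2 * Q = 0.
  rewrite -[RHS](_ : A2 * 0 + (- b3 * N2 + b2 * N3) * 0 + (b3 * N1 - b1 * N3) * 0
     + (- b2 * N1 + b1 * N2) * 0 = 0); last by ring.
  rewrite -{1}E2 -{1}F1 -{1}F2 -{1}F3 /Q /s /A2 /N1 /N2 /N3; ring.
have Hs : s = A2 * mu.
  apply: (mulIf HN).
  apply/eqP; rewrite -subr_eq0; apply/eqP.
  transitivity ((s * (N1 ^+ 2 + N2 ^+ 2 + N3 ^+ 2) + A2 * Q) - A2 * (mu * (N1 ^+ 2 + N2 ^+ 2 + N3 ^+ 2) + Q)).
    ring.
  by rewrite T0 hmu /Q; ring.
have HA' : A2 != 0 by exact: HA.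
have G k e : k * s - e * A2 = 0 -> e = mu * k.
  rewrite Hs => H; apply: (mulIf HA'); apply/eqP; rewrite -subr_eq0 -oppr_eq0; apply/eqP.
  by rewrite -H; ring.
move/G: F1 => <-; move/G: F2 => <-; move/G: F3 => <-.
by apply/vec3_eq; split; ring.
Qed.


Lemma det3_cross (R : rcfType) (a b w : 'rV[R]_3) : det3 a b w = dot3 w (cross3 a b).
Proof.
rewrite /det3 (vec3E a) (vec3E b) (vec3E w) !cross3E !dot3E; ring.
Qed.

Lemma card3 (T : finType) (a b c : T) : (#|[set a; b; c]| <= 3)%N.
Proof.
apply: leq_trans (leq_card_setU _ _) _. rewrite cards1 addn1 ltnS.
apply: leq_trans (leq_card_setU _ _) _. by rewrite !cards1.
Qed.

Theorem lemma4p1 (R : rcfType) (n : nat) (p : 'I_n -> 'rV[R]_3)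
    (tets : {set {set 'I_n}}) (gamma : {set 'I_n} -> R)
    (A lmin lmax gmin gmax : R) (c : 'I_n) (q : 'M[R]_(n,3)) :
  injective p ->
  edge_simple p tets gamma A lmin lmax gmin gmax ->
  stiffly_connected tets ->
  (forall v : 'M[R]_(n,3), stiffness p tets gamma v = 0 -> dotN q v = 0) ->
  forall s1 s2 s3 : 'I_n, oriented_triangle tets s1 s2 s3 ->
  exists qb : 'M[R]_(n,3),
    [/\ exists cxy cxz cyz : R,
          qb = q + cxy *: pxy p c + cxz *: pxz p c + cyz *: pyz p c,
        triangle_aligned p qb s1 s2 s3 &
        forall qb' : 'M[R]_(n,3),
          (exists cxy cxz cyz : R,
             qb' = q + cxy *: pxy p c + cxz *: pxz p c + cyz *: pyz p c) ->
          triangle_aligned p qb' s1 s2 s3 -> qb' = qb].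
Proof.
move=> _ [[A0 l0 _] [[card4 _] asp elenB _]] _ _ s1 s2 s3 [Hu [T HT /and3P [h1 h2 h3]]].
have Hnd : cross3 (p s2 - p s1) (p s3 - p s1) != 0.
  case: (pickP (mem (T :\: [set s1; s2; s3]))) => [d Hd|H0]; last first.
    have : (#|T| <= 3)%N.
      apply: (@leq_trans #|[set s1; s2; s3]|); last exact: card3; apply: subset_leq_card.
      apply/subsetP => x xT; move: (H0 x); rewrite /= inE xT andbT.
      by move/negbFE.
    by rewrite card4.
  move: Hd; rewrite /= !inE => /andP [Hd dT].
  have Hu4 : uniq [:: s1; s2; s3; d].
    move: Hu Hd; rewrite /= !inE !negb_or => /and3P [/andP [n12 n13] n23 _] /andP [/andP [d1 d2] d3].
    by rewrite n12 n13 n23 ![_ == d]eq_sym d1 d2 d3.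
  have Hedge : is_edge tets s1 s2.
    move: Hu => /= /andP [] ; rewrite inE negb_or => /andP [ne12 _] _.
    rewrite /is_edge ne12 /=; apply/existsP; exists T; by rewrite HT h1 h2.
  have := asp T HT s1 s2 s3 d h1 h2 h3 dT Hu4 s1 s2 h1 h2.
  move: (elenB _ _ Hedge) => /andP [Hl _].
  apply: contraTneq => H0.
  rewrite det3_cross H0 /dot3 big1 ?normr0 ?mulr0; last first.
    by move=> k _; rewrite (_ : (0 : 'rV[R]_3) ord0 k = 0) ?mulr0 // mxE.
  rewrite -ltNge; apply: exprn_gt0; exact: lt_le_trans l0 Hl.
have key : forall cxy cxz cyz,
  triangle_aligned p (q + cxy *: pxy p c + cxz *: pxz p c + cyz *: pyz p c) s1 s2 s3 <->
  PP (p s2 - p s1) (p s3 - p s1) (blk q s2 - blk q s1) (blk q s3 - blk q s1) (vec3 cyz (- cxz) cxy).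
  move=> cxy cxz cyz; rewrite /triangle_aligned /PP /= !blk_diff.
  by rewrite -(opprB (blk q s2) (blk q s1)) -(opprB (p s2) (p s1)).
have [w [Pw Uw]] := @core R _ _ (blk q s2 - blk q s1) (blk q s3 - blk q s1) Hnd.
have ew : vec3 (cx w) (- - cy w) (cz w) = w by rewrite opprK -vec3E.
exists (q + cz w *: pxy p c + (- cy w) *: pxz p c + cx w *: pyz p c); split.
- by exists (cz w), (- cy w), (cx w).
- by rewrite key ew.
- move=> qb' [cxy [cxz [cyz ->]]]; rewrite key => /Uw.
  rewrite (vec3E w) => /vec3_eq [-> e2 ->].
  by rewrite !cxE !cyE !czE -e2 opprK.
Qed.
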